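(* Let $G$ be a finite group of order $2^n$ with $n\ge2$, having normal subgroups $H_1$ and $H_2$ such that $G/H_1\cong(\mathbb{Z}/2\mathbb{Z})^{\oplus(n-2)}$ and $G/H_2\cong\mathbb{Z}/4\mathbb{Z}$. Then every subgroup of $H_1$ is normal in $G$. *)

(* Defs.v *)
From mathcomp Require Import all_boot all_order all_algebra all_fingroup all_solvable.
Set Implicit Arguments. Unset Strict Implicit. Unset Printing Implicit Defensive.

Definition Z2pow (k : nat) := 'rV['Z_2]_k.
Definition Z2pow_group (k : nat) : {group Z2pow k} := [set: Z2pow k]%G.
Definition Z4_group : {group 'Z_4} := [set: 'Z_4]%G.

(* Main.v *)
Require Import Defs.
From mathcomp Require Import all_boot all_order all_algebra all_fingroup all_solvable.

Theorem lemma4p2 (gT : finGroupType) (G H1 H2 : {group gT}) (n : nat) :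
  (2 <= n)%N -> #|G| = (2 ^ n)%N ->
  (H1 <| G)%g -> (H2 <| G)%g ->
  ((G / H1)%g \isog Z2pow_group (n - 2))%g ->
  ((G / H2)%g \isog Z4_group)%g ->
  forall K : {group gT}, (K \subset H1)%g -> (K <| G)%g.
Proof.
move=> n2 cardG nH1 nH2 iso1 iso2 K sKH1.
have sH1G := normal_sub nH1; have nH1G := normal_norm nH1.
have nH2G := normal_norm nH2.
have cH1 : #|H1| = 4.
  have := card_isog iso1.
  rewrite card_quotient // /Z2pow_group cardsT card_mx card_ord mul1n => hi.
  have := Lagrange sH1G; rewrite hi cardG -{2}(subnK n2) expnD => h.
  apply/eqP; rewrite -(eqn_pmul2r (expn_gt0 2 (n - 2))) h mulnC //.
have sq1 : forall y, y \in G -> (y ^+ 2 \in H1)%g.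
  move=> y yG; case/isogP: iso1 => f injf imf.
  have yN : y \in 'N(H1)%g := subsetP nH1G y yG.
  apply: coset_idr; first by rewrite groupX.
  have cy : coset H1 y \in (G / H1)%g by apply: mem_quotient.
  rewrite morphX //; apply/eqP; rewrite -(morph_injm_eq1 injf) ?groupX //.
  rewrite morphX // expgS expg1 FinRing.zmodMgE FinRing.zmod1gE.
  apply/eqP/matrixP => i j; rewrite !mxE.
  by move: (f _ i j) => a; case: a => [[|[|k]] ?]; apply/val_inj.
have dH1 : (G^`(1) \subset H1)%g.
  by apply: der1_min => //; rewrite (isog_abelian iso1) FinRing.zmod_abelian.
have dH2 : (G^`(1) \subset H2)%g.
  by apply: der1_min => //; rewrite (isog_abelian iso2) FinRing.zmod_abelian.
have [g gG g2] : exists2 g, g \in G & (g ^+ 2 \notin H2)%g.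
  case/isogP: iso2 => f injf imf.
  have : (1%R : 'Z_4) \in (f @* (G / H2))%g by rewrite imf inE.
  case/morphimP => x _ xG fx.
  case/morphimP: xG => y yN yG ->{x} in fx.
  exists y => //; apply/negP => y2.
  have e : (coset H2 y ^+ 2 = 1)%g by rewrite -morphX //; exact: coset_id y2.
  have : f (coset H2 y ^+ 2)%g = 1%g by rewrite e morph1.
  by rewrite morphX ?mem_quotient // -fx.
set N := (H1 :&: H2)%G.
have dN : (G^`(1) \subset N)%g by rewrite subsetI dH1.
have sN : (g ^+ 2 \in H1 :\: N)%g by rewrite !inE (negbTE g2) sq1.
have cN : (#|N| %| 2)%N.
  have d4 : (#|N| %| 4)%N by rewrite -cH1 cardSg // subsetIl.
  have ne4 : #|N| != 4.
    apply/eqP => h; have : (N :==: H1)%g by rewrite eqEcard subsetIl cH1 h.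
    by move/eqP => eN; move: sN; rewrite eN setDv inE.
  move: d4 ne4; case: #|N| => [|[|[|[|[|k]]]]] //.
have sq2 : forall z, z \in N -> (z ^+ 2 = 1)%g.
  by move=> z zN; apply/eqP; rewrite -order_dvdn (dvdn_trans (order_dvdG zN)).
have nNG : (G \subset 'N(N))%g by rewrite normsI.
have centN : forall c y, c \in N -> y \in G -> commute c y.
  move=> c y cN' yG.
  have [->|c1] := eqVneq c 1%g; first exact: commute_sym (commute1 _).
  have eN : N = [set 1%g; c] :> {set gT}.
    apply/eqP; rewrite eq_sym eqEcard cards2 eq_sym c1.
    rewrite (dvdn_leq _ cN) // andbT.
    by apply/subsetP => u; rewrite in_set2 => /orP[] /eqP -> //; exact: group1.
  have : (c ^ y \in N)%g by rewrite memJ_norm // (subsetP nNG).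
  rewrite eN !inE conjg_eq1 (negbTE c1) /=.
  by move/eqP/conjg_fixP/commgP.
have commN : forall x y, x \in G -> y \in G -> ([~ x, y] \in N)%g.
  by move=> x y xG yG; apply: (subsetP dN); rewrite derg1 mem_commg.
have centS : forall y, y \in G -> commute (g ^+ 2)%g y.
  move=> y yG; apply/commgP/conjg_fixP.
  rewrite conjXg conjg_mulR expgMn; last first.
    by apply: commute_sym; apply: centN => //; apply: commN.
  by rewrite (sq2 [~ g, y]%g) ?mulg1 ?commN.
have hC : (H1 \subset 'C(G))%g.
  have [N1|N2] : #|N| = 1 \/ #|N| = 2.
    by move: cN (cardG_gt0 N); case: #|N| => [|[|[|k]]] //; auto.
  - apply/centsP => h hH y yG.
    have : ([~ h, y] \in N)%g by apply: commN => //; apply: (subsetP sH1G).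
    have e1 : (1 :==: N)%g by rewrite eqEcard sub1G cards1 N1.
    by rewrite -(eqP e1) inE => /commgP.
  - set M := 'C_H1(G)%G.
    have sNM : (N \subset M)%g.
      rewrite subsetI subsetIl; apply/centsP => c cN' y yG.
      exact: centN.
    have sM : (g ^+ 2 \in M)%g.
      by rewrite inE sq1 //=; apply/centP => y yG; exact: centS.
    have pNM : (N \proper M)%g.
      apply/properP; split => //; exists (g ^+ 2)%g => //.
      by move: sN; rewrite inE => /andP[].
    have lt := proper_card pNM.
    have d4 : (#|M| %| 4)%N by rewrite -cH1 cardSg // subsetIl.
    have c4 : #|M| = 4.
      move: d4 lt; rewrite N2; case: #|M| => [|[|[|[|[|k]]]]] //.
    have : (M :==: H1)%g by rewrite eqEcard subsetIl cH1 c4.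
    by move/eqP <-; rewrite subsetIr.
apply: sub_center_normal.
by rewrite /center subsetI (subset_trans sKH1 sH1G) (subset_trans sKH1 hC).
Qed.
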